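(* Let $X$ be a finite set, let $k\ge 2$ be an integer, and let $\bm{c}$ be a choice function defined on the complete collection $\mathcal{B}=2^X$ of all non-empty subsets of $X$ (i.e. $\bm{c}(B)\in B$ for every non-empty $B\subseteq X$). Then $(\mathcal{B},\bm{c})$ is rationalizable with $k^{th}$-order choice under limited attention if and only if $\bm{c}$ satisfies both of the following axioms: (SARP$^k$) for all $x,y\in X$: if $x$ is $k^{th}$-order indirectly chosen over $y$, then $y$ is not $k^{th}$-order directly chosen over $x$; (WARP(LA$^k$)) for all non-empty $S,T\subseteq X$ and all $x,y\in S\cap T$ with $|T|\le k$: if $x=\bm{c}(S)$ and $y=\bm{c}(T)$, then $x=\bm{c}(S\setminus\{y\})$.
   Context: A strict preference relation on $X$ is a complete, transitive and asymmetric binary relation $\succ$. An attention filter is a map $\Gamma$ from non-empty subsets of $X$ to subsets of $X$ such that $\Gamma(B)\subseteq B$ for every $B$, and $\Gamma(B)=\Gamma(B\setminus\{x\})$ for every $B$ and every $x\in B\setminus\Gamma(B)$. A data set $(\mathcal{B},\bm{c})$, where $\mathcal{B}$ is a collection of non-empty subsets of $X$ and $\bm{c}(B)\in B$ for $B\in\mathcal{B}$, is rationalizable with $k^{th}$-order choice under limited attention if there exist a strict preference relation $\succ$ and an attention filter $\Gamma$ with $|\Gamma(B)|\ge\min\{|B|,k\}$ for all non-empty $B\subseteq X$, such that for every $B\in\mathcal{B}$, $\bm{c}(B)$ is the $\succ$-maximal element of $\Gamma(B)$. We say $x_1$ is $k^{th}$-order directly chosen over $x_2$ if there is $B\in\mathcal{B}$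 with $|B|\le k$, $x_1,x_2\in B$ and $x_1=\bm{c}(B)$. We say $x_1$ is $k^{th}$-order indirectly chosen over $x_n$ if there exist $x_2,\dots,x_{n-1}$ such that $x_i$ is $k^{th}$-order directly chosen over $x_{i+1}$ for each $i=1,\dots,n-1$. *)

(* Defs.v *)
From mathcomp Require Import all_boot.
From Stdlib Require Import Relation_Operators.
Set Implicit Arguments. Unset Strict Implicit. Unset Printing Implicit Defensive.

Section Defs.
Variable X : finType.

Definition strict_pref (r : rel X) : Prop :=
  (forall x y, x != y -> r x y \/ r y x) /\ transitive r /\
  (forall x y, r x y -> ~~ r y x).

Definition attention_filter (G : {set X} -> {set X}) : Prop :=
  forall B : {set X}, B != set0 ->
    G B \subset B /\
    (forall x, x \in B -> x \notin G B -> B :\ x != set0 -> G B = G (B :\ x)).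

Definition is_max (r : rel X) (A : {set X}) (x : X) : Prop :=
  x \in A /\ forall y, y \in A -> y != x -> r x y.

Definition rationalizable_k (k : nat) (c : {set X} -> X) : Prop :=
  exists (r : rel X) (G : {set X} -> {set X}),
    strict_pref r /\ attention_filter G /\
    (forall B : {set X}, B != set0 -> minn #|B| k <= #|G B|) /\
    (forall B : {set X}, B != set0 -> is_max r (G B) (c B)).

Definition dchosen (k : nat) (c : {set X} -> X) (x1 x2 : X) : Prop :=
  x1 != x2 /\ exists B : {set X}, [/\ #|B| <= k, x1 \in B, x2 \in B & x1 = c B].

Definition ichosen (k : nat) (c : {set X} -> X) : X -> X -> Prop :=
  clos_trans X (dchosen k c).

Definition SARP_k (k : nat) (c : {set X} -> X) : Prop :=
  forall x y : X, ichosen k c x y -> ~ dchosen k c y x.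

Definition WARP_LA_k (k : nat) (c : {set X} -> X) : Prop :=
  forall (S T : {set X}) (x y : X),
    S != set0 -> T != set0 -> x \in S :&: T -> y \in S :&: T -> x != y ->
    #|T| <= k -> x = c S -> y = c T -> x = c (S :\ y).

End Defs.

(* Main.v *)
Require Import Defs.
From mathcomp Require Import all_boot.
From Stdlib Require Import Relation_Operators Operators_Properties ClassicalEpsilon.
From mathcomp Require Import zify.

Section Proofs.
Variable X : finType.

Lemma subset_card (A : {set X}) m : m <= #|A| -> exists T : {set X}, T \subset A /\ #|T| = m.
Proof.
move=> hm0; move Hn: #|A| hm0 => n; elim: n A Hn => [|n IH] A hA hm.
  by exists A; split => //; rewrite hA; move: hm; rewrite leqn0 => /eqP ->.
case: (ltnP m n.+1) => hlt; last first.
  by exists A; split => //; rewrite hA; lia.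
have : A != set0 by apply/eqP => A0; rewrite A0 cards0 in hA.
case/set0Pn => a ha.
have hc : #|A :\ a| = n by move: (cardsD1 a A); rewrite ha hA add1n => -[].
have [T [hT1 hT2]] := IH _ hc hlt.
exists T; split => //; apply: subset_trans hT1 _; exact: subD1set.
Qed.

Lemma ichosen_irr k (c : {set X} -> X) : SARP_k k c -> forall x, ~ ichosen k c x x.
Proof.
move=> hs x hx; have hn := @clos_trans_tn1 X (dchosen k c) x x hx.
inversion hn as [y Hd Hy|y z Hd Hn Hz].
  by case: Hd => /eqP.
apply: (hs x y) Hd; exact: (@clos_tn1_trans X (dchosen k c)).
Qed.

Lemma theorem1_aux (k : nat) (c : {set X} -> X) :
  2 <= k ->
  (forall B : {set X}, B != set0 -> c B \in B) ->
  rationalizable_k k c <-> (SARP_k k c /\ WARP_LA_k k c).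
Proof.
move=> hk hc; split.
- case=> r [G [[hcomp [htr hasy]] [haf [hsz hmax]]]].
  have small : forall B, B != set0 -> #|B| <= k -> G B = B.
    move=> B hB hBk; have [h1 _] := haf B hB.
    apply/eqP; rewrite eqEcard h1 /=; move: (hsz B hB).
    by rewrite (minn_idPl hBk).
  have dr : forall x y, dchosen k c x y -> r x y.
    move=> x y [hxy [B [hBk hx hy hxe]]].
    have hB : B != set0 by apply/set0Pn; exists x.
    have [_ hm] := hmax B hB; rewrite (small B hB hBk) -hxe in hm.
    by apply: hm => //; rewrite eq_sym.
  have ir : forall x y, ichosen k c x y -> r x y.
    move=> x y; elim => [a b /dr //|a b d _ h1 _ h2]; exact: htr h1 h2.
  split.
    move=> x y hxy hyx; have := hasy _ _ (ir _ _ hxy).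
    by rewrite (dr _ _ hyx).
  move=> S T x y hS hT /setIP [hxS hxT] /setIP [hyS hyT] hxy hTk hx hy.
  have [_ hmT] := hmax T hT; rewrite (small T hT hTk) -hy in hmT.
  have ryx : r y x by apply: hmT; rewrite ?hxT // eq_sym.
  have [hxG hmS] := hmax S hS; rewrite -hx in hxG hmS.
  have hyG : y \notin G S.
    apply/negP => hyG; have := hasy _ _ (hmS y hyG _).
    by rewrite ryx eq_sym => /(_ hxy).
  have hSy : S :\ y != set0 by apply/set0Pn; exists x; rewrite !inE hxy.
  have [_ hf] := haf S hS; have hGe := hf y hyS hyG hSy.
  have [h1 h2] := hmax _ hSy; rewrite -hGe in h1 h2.
  apply/eqP; case: (eqVneq x (c (S :\ y))) => // hne.
  rewrite eq_sym in hne; have a1 := hmS _ h1 hne; rewrite eq_sym in hne.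
  by have := hasy _ _ (h2 _ hxG hne); rewrite a1.
- case=> hs hw.
  pose Pb (x y : X) : bool := if excluded_middle_informative (ichosen k c x y) then true else false.
  have PbP : forall x y, Pb x y <-> ichosen k c x y.
    by move=> x y; rewrite /Pb; case: excluded_middle_informative.
  pose h x := #|[set z | Pb z x]|.
  have hlt : forall x y, ichosen k c x y -> h x < h y.
    move=> x y hxy; apply: proper_card; apply/properP; split.
      apply/subsetP => z; rewrite !inE => /PbP hz; apply/PbP; exact: t_trans hz hxy.
    by exists x; rewrite !inE; [apply/PbP | apply/negP => /PbP /(ichosen_irr _ _ hs)].
  pose n := #|X|.
  pose key x := h x * n + enum_rank x.
  have ern : forall x : X, enum_rank x < n by move=> x; exact: ltn_ord.
  pose r x y := key x < key y.
  have Pr : forall x y, ichosen k c x y -> r x y.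
    move=> x y /hlt hxy; rewrite /r /key.
    have := ern x; have := ern y; nia.
  have keyinj : forall x y, key x = key y -> x = y.
    move=> x y e; have : key x %% n = key y %% n by rewrite e.
    rewrite /key !modnMDl !modn_small ?ern // => e2.
    by apply: enum_rank_inj; apply: val_inj.
  have hsp : strict_pref r.
    split; [|split].
    - move=> x y hxy; rewrite /r; case: (ltngtP (key x) (key y)); auto.
      by move/keyinj => e; rewrite e eqxx in hxy.
    - move=> y x z; exact: ltn_trans.
    - by move=> x y; rewrite /r => /ltnW; rewrite leqNgt.
  have dr : forall x y, dchosen k c x y -> r x y by move=> x y hd; apply: Pr; exact: t_step.
  pose G (B : {set X}) := [set z in B | (z == c B) || r (c B) z].
  exists r, G; split => //; split; [|split].
  + move=> B hB; split; first by apply/subsetP => z; rewrite inE => /andP[].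
    move=> x hxB; rewrite inE hxB /= negb_or => /andP [hx1 hx2] hBx.
    have ryx : r x (c B).
      case: hsp => [hcm _]; case: (hcm x (c B) hx1) => //.
      by move=> h'; rewrite h' in hx2.
    pose T := [set x; c B].
    have hT : T != set0 by apply/set0Pn; exists x; rewrite !inE eqxx.
    have hcT : c T = x.
      have := hc T hT; rewrite !inE => /orP [/eqP //|/eqP hcT].
      have : r (c B) x.
        apply: dr; split; first by rewrite eq_sym.
      exists T; split; rewrite ?hcT //; last by rewrite !inE eqxx ?orbT.
          by rewrite cards2; case: (x != c B); lia.
        by rewrite !inE eqxx orbT.
      move=> h'; case: hsp => [_ [_ ha]]; by have := ha _ _ h'; rewrite ryx.
    have hcBB := hc B hB.
    have e : c B = c (B :\ x).
      apply: (hw B T (c B) x) => //; rewrite ?inE ?eqxx ?orbT ?hxB ?hcBB //.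
        by rewrite eq_sym.
      by rewrite cards2; case: (x != c B); lia.
    apply/setP => z; rewrite !inE -e.
    case: (eqVneq z x) => [->|//]; by rewrite hxB /= (negbTE hx1) (negbTE hx2).
  +
    have claim : forall m (B : {set X}), #|B| = m -> B != set0 -> exists T : {set X},
        [/\ T \subset B, c B \in T, minn #|B| k <= #|T|, #|T| <= k & c T = c B].
      elim/ltn_ind => m IH B hm hB.
      case: (leqP #|B| k) => hBk.
        by exists B; split; rewrite ?hc // ?(minn_idPl hBk).
      set x := c B; have hxB : x \in B := hc B hB.
      have hc1 : k.-1 <= #|B :\ x|.
        by move: (cardsD1 x B); rewrite hxB; lia.
      have [T1 [hT1 hT1c]] := subset_card _ _ hc1.
      pose T0 := x |: T1.
      have hxT1 : x \notin T1 by apply/negP => /(subsetP hT1); rewrite !inE eqxx.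
      have hT0c : #|T0| = k by rewrite cardsU1 hxT1 hT1c; lia.
      have hT0 : T0 != set0 by apply/set0Pn; exists x; rewrite !inE eqxx.
      have hT0B : T0 \subset B.
        rewrite subUset sub1set hxB /=; apply: subset_trans hT1 _; exact: subD1set.
      case: (eqVneq (c T0) x) => hcT0.
        by exists T0; split; rewrite ?hcT0 ?hT0c ?inE ?eqxx.
      set y := c T0 in hcT0.
      have hyT0 : y \in T0 := hc T0 hT0.
      have hyB : y \in B := subsetP hT0B _ hyT0.
      have e : x = c (B :\ y).
        have hxI : x \in B :&: T0 by rewrite inE hxB setU11.
        have hyI : y \in B :&: T0 by rewrite inE hyB hyT0.
        have hxy : x != y by rewrite eq_sym.
        have hT0k : #|T0| <= k by rewrite hT0c.
        exact: (hw B T0 x y hB hT0 hxI hyI hxy hT0k erefl erefl).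
      have hBy : #|B :\ y| = #|B|.-1.
        by move: (cardsD1 y B); rewrite hyB add1n => ->.
      have hBy0 : B :\ y != set0 by apply/set0Pn; exists x; rewrite !inE hxB andbT eq_sym.
      have hlm : #|B :\ y| < m by rewrite hBy -hm; lia.
      have [T [hT1' hT2 hT3 hT4 hT5]] := IH #|B :\ y| hlm _ erefl hBy0.
      exists T; split.
      * apply: subset_trans hT1' _; exact: subD1set.
      * by rewrite e.
      * move: hT3; rewrite hBy; have hkk : k <= #|B|.-1 by lia.
        by rewrite (minn_idPr hkk).
      * done.
      * by rewrite hT5 -e.
    move=> B hB; have [T [h1 h2 h3 h4 h5]] := claim _ B erefl hB.
    apply: leq_trans h3 _; apply: subset_leq_card; apply/subsetP => z hz.
    rewrite inE (subsetP h1 _ hz) /=; case: (eqVneq z (c B)) => //= hne.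
    apply: dr; split; first by rewrite eq_sym.
    by exists T; split; rewrite ?h5.
  + move=> B hB; split; first by rewrite inE hc ?eqxx.
    by move=> y; rewrite inE => /andP [_ /orP [/eqP ->|//]]; rewrite eqxx.
Qed.

End Proofs.

Theorem theorem1 (X : finType) (k : nat) (c : {set X} -> X) :
  2 <= k ->
  (forall B : {set X}, B != set0 -> c B \in B) ->
  rationalizable_k k c <-> (SARP_k k c /\ WARP_LA_k k c).
Proof. exact: theorem1_aux. Qed.
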